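(* If $A$ is any SIP subset of $\mathbb N$ (including $\mathbb N$ itself), then $A$ can be partitioned into two sets neither of which contains a translate of an SIP set. Consequently, the family of subsets of $\mathbb N$ that contain a translate of an SIP set is not a filterdual.
   Context: $\mathbb N=\{1,2,\dots\}$. For a finite $F\subset\mathbb Z$, $\sigma_F$ is the sum of its elements ($\sigma_\emptyset=0$); for $A\subset\mathbb Z$, $IP(A)=\{\sigma_F:F\subset A\text{ finite}\}$ and $SIP(A)=\{a-b:a,b\in IP(A)\}$. A set $B\subset\mathbb N$ is an SIP set if $SIP(L)\cap\mathbb N\subset B$ for some infinite $L\subset\mathbb N$. A set $B\subset\mathbb N$ contains a translate of an SIP set if there exist an infinite $L\subset\mathbb N$ and $u\in\mathbb Z$ with $(SIP(L)+u)\cap\mathbb N\subset B$. A family $\mathcal F$ of subsets of $\mathbb N$ (closed under supersets) is a filterdual if $A_1\cup A_2\in\mathcal F$ implies $A_1\in\mathcal F$ or $A_2\in\mathcal F$. *)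

(* Defs.v *)
(* subsets of Z are predicates Z -> Prop; N = {1,2,...} is
   the set of positive integers. *)
From Stdlib Require Import ZArith List.
Open Scope Z_scope.

(* sigma_F : sum of the elements of a finite set F, given as a duplicate-free list *)
Definition sigma (F : list Z) : Z := fold_right Z.add 0 F.

Definition subN (B : Z -> Prop) : Prop := forall x, B x -> 0 < x.

Definition infinite_set (L : Z -> Prop) : Prop :=
  ~ (exists l : list Z, forall x, L x -> In x l).

(* IP(A) = { sigma_F : F finite subset of A } (empty F gives 0) *)
Definition IP (A : Z -> Prop) (x : Z) : Prop :=
  exists F : list Z, NoDup F /\ (forall y, In y F -> A y) /\ x = sigma F.

Definition SIP (A : Z -> Prop) (x : Z) : Prop :=
  exists a b, IP A a /\ IP A b /\ x = a - b.

Definition is_SIP_set (B : Z -> Prop) : Prop :=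
  exists L : Z -> Prop, subN L /\ infinite_set L /\
    (forall x, SIP L x -> 0 < x -> B x).

Definition contains_translate_SIP (B : Z -> Prop) : Prop :=
  exists (L : Z -> Prop) (u : Z), subN L /\ infinite_set L /\
    (forall x, SIP L x -> 0 < x + u -> B (x + u)).

Definition filterdual (Fam : (Z -> Prop) -> Prop) : Prop :=
  forall A1 A2 : Z -> Prop, subN A1 -> subN A2 ->
    Fam (fun x => A1 x \/ A2 x) -> Fam A1 \/ Fam A2.

(* Main.v *)
Require Import Defs.
From Stdlib Require Import ZArith List Lia Classical Bool.
Open Scope Z_scope.

Definition evenp (q : positive) : bool := match q with xO _ => true | _ => false end.
Fixpoint Pp (p : positive) : bool :=
  match p with xH => true | xO q => Pp q | xI q => xorb (Pp q) (evenp q) end.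
Fixpoint Gp (p : positive) : bool :=
  match p with xH => true | xO q => Gp q | xI q => evenp q end.
Definition Pc (z : Z) : bool := match z with Zpos p => Pp p | _ => false end.
Definition Gc (z : Z) : bool := match z with Zpos p => Gp p | _ => false end.

Lemma PE x : 0 <= x -> Pc (2*x) = Pc x.
Proof. destruct x; simpl; auto; lia. Qed.
Lemma PO x : 0 <= x -> Pc (2*x+1) = xorb (Pc x) (Z.even x).
Proof. destruct x as [|q|q]; intros; simpl; try reflexivity; try lia; destruct q; reflexivity. Qed.
Lemma GE x : 0 <= x -> Gc (2*x) = Gc x.
Proof. destruct x; simpl; auto; lia. Qed.
Lemma GO x : 0 <= x -> Gc (2*x+1) = Z.even x.
Proof. destruct x as [|q|q]; intros; simpl; try reflexivity; try lia; destruct q; reflexivity. Qed.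

Lemma evenE x : exists y, x = 2*y \/ x = 2*y+1.
Proof. destruct (Z.Even_or_Odd x) as [[y Hy]|[y Hy]]; exists y; auto. Qed.

Lemma Pm1_nat (n : nat) : forall x, 1 <= x <= Z.of_nat n ->
  xorb (Pc x) (Pc (x-1)) = xorb (Z.even x) (Gc x).
Proof.
  induction n; intros x Hx; [lia|].
  destruct (evenE x) as [y [Hy|Hy]]; subst x.
  - rewrite PE by lia. rewrite GE by lia.
    replace (2*y-1) with (2*(y-1)+1) by ring. rewrite PO by lia.
    assert (IH := IHn y ltac:(lia)).
    rewrite Z.even_mul. simpl.
    replace (y-1) with (Z.pred y) by lia. rewrite Z.even_pred. rewrite <- Z.negb_even.
    replace (Z.pred y) with (y-1) by lia.
    destruct (Pc y), (Pc (y-1)), (Z.even y), (Gc y); simpl in *; congruence.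
  - rewrite PO by lia. rewrite GO by lia.
    replace (2*y+1-1) with (2*y) by ring. rewrite PE by lia.
    rewrite Z.even_add, Z.even_mul. simpl.
    destruct (Pc y), (Z.even y); reflexivity.
Qed.

Lemma Pm1 x : 1 <= x -> xorb (Pc x) (Pc (x-1)) = xorb (Z.even x) (Gc x).
Proof. intros. apply (Pm1_nat (Z.to_nat x)). lia. Qed.

Lemma sep : forall k, 0 <= k -> forall a b, 0 <= a < 2^k -> 0 <= b ->
  Pc (a + 2^(k+1)*b) = xorb (Pc a) (Pc b).
Proof.
  intros k Hk. pattern k. apply natlike_ind; [| |exact Hk]; clear k Hk.
  - intros a b Ha Hb. simpl in Ha. assert (a = 0) by lia. subst a.
    simpl. replace (0 + 2*b) with (2*b) by ring. apply PE; auto.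
  - intros k Hk IH a b Ha Hb.
    rewrite Z.pow_succ_r in Ha by lia.
    replace (Z.succ k + 1) with (Z.succ (k+1)) by ring. rewrite Z.pow_succ_r by lia.
    assert (0 <= 2^k) by (apply Z.pow_nonneg; lia).
    assert (0 <= 2^(k+1)*b) by (apply Z.mul_nonneg_nonneg; auto; apply Z.pow_nonneg; lia).
    destruct (evenE a) as [a' [Ha'|Ha']]; subst a.
    + replace (2*a' + 2*2^(k+1)*b) with (2*(a' + 2^(k+1)*b)) by ring.
      rewrite !PE by lia. apply IH; lia.
    + replace (2*a' + 1 + 2*2^(k+1)*b) with (2*(a' + 2^(k+1)*b)+1) by ring.
      rewrite !PO by lia. rewrite IH by lia.
      rewrite Z.even_add, Z.even_mul. rewrite Z.pow_add_r by lia.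
      rewrite Z.even_mul. simpl (Z.even (2^1)).
      rewrite orb_true_r. destruct (Z.even (2^k)); simpl;
      destruct (Pc a'), (Pc b), (Z.even a'); reflexivity.
Qed.

Lemma Pscale : forall m, 0 <= m -> forall x, 0 <= x -> Pc (2^m*x) = Pc x.
Proof.
  intros m Hm. pattern m. apply natlike_ind; [| |exact Hm]; clear m Hm.
  - intros; simpl. destruct x; reflexivity.
  - intros m Hm IH x Hx. rewrite Z.pow_succ_r by lia.
    assert (0 <= 2^m) by (apply Z.pow_nonneg; lia).
    rewrite <- Z.mul_assoc, PE by nia. auto.
Qed.
Lemma Gscale : forall m, 0 <= m -> forall x, 0 <= x -> Gc (2^m*x) = Gc x.
Proof.
  intros m Hm. pattern m. apply natlike_ind; [| |exact Hm]; clear m Hm.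
  - intros; simpl. destruct x; reflexivity.
  - intros m Hm IH x Hx. rewrite Z.pow_succ_r by lia.
    assert (0 <= 2^m) by (apply Z.pow_nonneg; lia).
    rewrite <- Z.mul_assoc, GE by nia. auto.
Qed.

Lemma sub : forall k, 0 <= k -> forall a b, 1 <= a <= 2^k -> 1 <= b ->
  Pc (2^(k+1)*b - a) = xorb (xorb (Pc a) (Pc b)) (xorb true (xorb (Gc a) (Gc b))).
Proof.
  intros k Hk. pattern k. apply natlike_ind; [| |exact Hk]; clear k Hk.
  - intros a b Ha Hb. simpl in Ha. assert (a = 1) by lia. subst a.
    assert (E: 2^(0+1) = 2) by reflexivity. rewrite E. replace (2*b - 1) with (2*(b-1)+1) by ring. change (Pc 1) with true. change (Gc 1) with true. rewrite PO by lia.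
    assert (H := Pm1 b Hb).
    replace (b-1) with (Z.pred b) by lia. rewrite Z.even_pred. rewrite <- Z.negb_even.
    replace (Z.pred b) with (b-1) by lia.
    destruct (Pc b), (Pc (b-1)), (Z.even b), (Gc b); simpl in *; congruence.
  - intros k Hk IH a b Ha Hb.
    rewrite Z.pow_succ_r in Ha by lia.
    replace (Z.succ k + 1) with (Z.succ (k+1)) by ring. rewrite Z.pow_succ_r by lia.
    assert (0 < 2^k) by (apply Z.pow_pos_nonneg; lia).
    assert (2^(k+1) = 2*2^k) by (rewrite Z.pow_add_r, Z.pow_1_r by lia; ring).
    destruct (evenE a) as [a' [Ha'|Ha']]; subst a.
    + replace (2*2^(k+1)*b - 2*a') with (2*(2^(k+1)*b - a')) by ring.
      rewrite !PE, GE by nia. apply IH; lia.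
    + replace (2*2^(k+1)*b - (2*a'+1)) with (2*(2^(k+1)*b - (a'+1))+1) by ring.
      rewrite (PO (2^(k+1)*b - (a'+1))) by nia. rewrite (PO a'), GO by lia. rewrite IH by lia.
      assert (H1 := Pm1 (a'+1) ltac:(lia)).
      replace (a'+1-1) with a' in H1 by ring.
      rewrite Z.even_sub. rewrite H0, <- Z.mul_assoc, Z.even_mul. simpl (Z.even 2).
      rewrite orb_true_l. rewrite Z.even_add in *. simpl (Z.even 1) in *.
      destruct (Pc (a'+1)), (Pc a'), (Z.even a'), (Gc (a'+1)), (Pc b), (Gc b); simpl in *; congruence.
Qed.

Lemma unbounded L : subN L -> infinite_set L -> forall B excl,
  exists x, L x /\ B < x /\ ~ In x excl.
Proof.
  intros HS HI B excl. apply NNPP; intro Hn. apply HI.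
  exists (excl ++ map Z.of_nat (seq 0 (S (Z.to_nat B)))).
  intros x Hx. apply in_or_app.
  destruct (classic (In x excl)) as [Hin|Hin]; [left; exact Hin|right].
  assert (x <= B).
  { destruct (Z_le_gt_dec x B); auto. exfalso; apply Hn; exists x; repeat split; auto; lia. }
  assert (0 < x) by (apply HS; auto).
  apply in_map_iff. exists (Z.to_nat x). split; [lia|]. apply in_seq. lia.
Qed.

Lemma get_many L : subN L -> infinite_set L -> forall excl (n : nat),
  exists l, length l = n /\ NoDup l /\ forall x, In x l -> L x /\ ~ In x excl.
Proof.
  intros HS HI excl n. induction n.
  - exists nil. split; [reflexivity|split; [constructor|intros z []]].
  - destruct IHn as [l [Hlen [Hnd Hl]]].
    destruct (unbounded L HS HI 0 (excl ++ l)) as [x [Hx [_ Hxn]]].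
    exists (x :: l). split; [simpl; lia|split].
    + constructor; auto. intro; apply Hxn; apply in_or_app; auto.
    + intros y [<-|Hy].
      * split; auto. intro; apply Hxn; apply in_or_app; auto.
      * apply Hl; auto.
Qed.

Lemma pigeon L : subN L -> infinite_set L -> forall M excl, 0 < M ->
  exists a b k, L a /\ L b /\ a < b /\ ~ In a excl /\ ~ In b excl /\ b - a = M * k.
Proof.
  intros HS HI M excl HM.
  destruct (get_many L HS HI excl (S (Z.to_nat M))) as [l [Hlen [Hnd Hl]]].
  set (f := fun x => x mod M).
  assert (Hnn : ~ NoDup (map f l)).
  { intro Hn. assert (Hinc : incl (map f l) (map Z.of_nat (seq 0 (Z.to_nat M)))).
    { intros y Hy. apply in_map_iff in Hy. destruct Hy as [x [<- _]].
      assert (Hb := Z.mod_pos_bound x M HM). apply in_map_iff.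
      exists (Z.to_nat (f x)). unfold f. split; [lia|]. apply in_seq. lia. }
    assert (Hle := NoDup_incl_length Hn Hinc).
    rewrite !length_map, length_seq in Hle. lia. }
  assert (Hnp : ~ ForallPairs (fun x y => f x = f y -> x = y) l).
  { intro Hp. apply Hnn. apply NoDup_map_NoDup_ForallPairs; auto. }
  unfold ForallPairs in Hnp.
  apply not_all_ex_not in Hnp. destruct Hnp as [x Hnp].
  apply not_all_ex_not in Hnp. destruct Hnp as [y Hnp].
  apply imply_to_and in Hnp. destruct Hnp as [Hx Hnp].
  apply imply_to_and in Hnp. destruct Hnp as [Hy Hnp].
  apply imply_to_and in Hnp. destruct Hnp as [Hf Hxy].
  unfold f in Hf.
  assert (Ex := Z_div_mod_eq_full x M). assert (Ey := Z_div_mod_eq_full y M).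
  destruct (Hl x Hx) as [Lx Nx]. destruct (Hl y Hy) as [Ly Ny].
  destruct (Z_lt_ge_dec x y) as [Hlt|Hgt].
  - exists x, y, (y/M - x/M). split; auto. split; auto. split; auto. split; auto. split; auto. rewrite Z.mul_sub_distr_l. lia.
  - assert (y < x) by lia.
    exists y, x, (x/M - y/M). split; auto. split; auto. split; auto. split; auto. split; auto. rewrite Z.mul_sub_distr_l. lia.
Qed.

Lemma SIP_of L la lb : NoDup la -> NoDup lb -> (forall y, In y la -> L y) ->
  (forall y, In y lb -> L y) -> SIP L (sigma la - sigma lb).
Proof.
  intros. exists (sigma la), (sigma lb). split; [|split]; auto.
  - exists la; auto.
  - exists lb; auto.
Qed.

Lemma notin_cons (x y : Z) l : ~ In x (y :: l) -> x <> y /\ ~ In x l.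
Proof. intros H; split; intro; apply H; simpl; auto. Qed.

Ltac neqs := match goal with
 | Hc : ?x = ?y |- False => first [ match goal with Hn : ~ In x _ |- _ => apply Hn; rewrite Hc; simpl; tauto end | match goal with Hn : ~ In y _ |- _ => apply Hn; rewrite <- Hc; simpl; tauto end ] end.
Ltac nodup := repeat constructor; simpl; let Hc := fresh in intro Hc; repeat (destruct Hc as [Hc|Hc]; [neqs|]); destruct Hc.
Ltac inL := let y := fresh in let Hy := fresh in intros y Hy; simpl in Hy;
  repeat (destruct Hy as [Hy|Hy]; [subst y; assumption|]); destruct Hy.

Lemma colsep y0 X : 0 < y0 -> 0 <= X -> Pc (y0 + 2^(y0+1)*X) = xorb (Pc y0) (Pc X).
Proof.
  intros. apply sep; try lia. split; [lia|]. apply Z.pow_gt_lin_r; lia.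
Qed.

Lemma key L u c : subN L -> infinite_set L ->
  (forall x, SIP L x -> 0 < x + u -> Pc (x + u) = c) -> False.
Proof.
  intros HS HI H.
  destruct (unbounded L HS HI (-u) nil) as [l0 [L0 [Hl0 _]]].
  remember (u + l0) as y0 eqn:Ey0.
  assert (HT0 : 0 < 2^(y0+1)) by (apply Z.pow_pos_nonneg; lia).
  remember (2^(y0+1)) as T0 eqn:ET0.
  destruct (pigeon L HS HI T0 (l0 :: nil) HT0) as [a1 [b1 [k1 [La1 [Lb1 [Hab1 [Na1 [Nb1 E1]]]]]]]].
  assert (Hk1 : 1 <= k1) by nia.
  assert (Hk1p : k1 < 2^k1) by (apply Z.pow_gt_lin_r; lia).
  assert (HT1 : 0 < T0 * 2^(k1+1)) by (apply Z.mul_pos_pos; auto; apply Z.pow_pos_nonneg; lia).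
  destruct (pigeon L HS HI _ (l0 :: a1 :: b1 :: nil) HT1) as [a2 [b2 [k2 [La2 [Lb2 [Hab2 [Na2 [Nb2 E2]]]]]]]].
  assert (Hk2 : 1 <= k2) by nia.
  assert (HP1 : 0 < 2^(k1+1)) by (apply Z.pow_pos_nonneg; lia).
  remember (2^(k1+1) * k2) as N2 eqn:EN2.
  rewrite <- Z.mul_assoc, <- EN2 in E2.
  assert (HN2 : k1 < N2).
  { assert (2^(k1+1) = 2 * 2^k1) by (rewrite Z.pow_add_r, Z.pow_1_r by lia; ring). nia. }
  assert (HN2p : N2 < 2^N2) by (apply Z.pow_gt_lin_r; lia).
  assert (HT2 : 0 < T0 * 2^(N2+1)) by (apply Z.mul_pos_pos; auto; apply Z.pow_pos_nonneg; lia).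
  destruct (pigeon L HS HI _ (l0 :: a1 :: b1 :: a2 :: b2 :: nil) HT2) as [a3 [b3 [k3 [La3 [Lb3 [Hab3 [Na3 [Nb3 E3]]]]]]]].
  assert (Hk3 : 1 <= k3) by nia.
  assert (HP2 : 0 < 2^(N2+1)) by (apply Z.pow_pos_nonneg; lia).
  remember (2^(N2+1) * k3) as N3 eqn:EN3.
  rewrite <- Z.mul_assoc, <- EN3 in E3.
  assert (HN3 : N2 < N3).
  { assert (2^(N2+1) = 2 * 2^N2) by (rewrite Z.pow_add_r, Z.pow_1_r by lia; ring). nia. }
  assert (Hy0 : 0 < y0) by lia.
  assert (HN1 : 0 <= k1) by lia.
  assert (HN2' : 0 <= N2) by lia.
  assert (HN3' : 0 <= N3) by lia.
  assert (AH : forall x v, SIP L x -> x + u = v -> 0 < v -> Pc v = c).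
  { intros x v Hx <- Hv. apply H; auto. }
  assert (C0 : Pc y0 = c).
  { apply (AH (sigma (l0 :: nil) - sigma nil)); [apply SIP_of; [nodup|nodup|inL|inL] | simpl; rewrite Ey0; ring | exact Hy0]. }
  assert (C1 : Pc (y0 + T0 * k1) = c).
  { apply (AH (sigma (l0 :: b1 :: nil) - sigma (a1 :: nil))); [apply SIP_of; [nodup|nodup|inL|inL] | simpl; rewrite Ey0, <- E1; ring | clear -Hy0 HT0 HN1; nia]. }
  assert (C2 : Pc (y0 + T0 * N2) = c).
  { apply (AH (sigma (l0 :: b2 :: nil) - sigma (a2 :: nil))); [apply SIP_of; [nodup|nodup|inL|inL] | simpl; rewrite Ey0, <- E2; ring | clear -Hy0 HT0 HN2'; nia]. }
  assert (C3 : Pc (y0 + T0 * N3) = c).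
  { apply (AH (sigma (l0 :: b3 :: nil) - sigma (a3 :: nil))); [apply SIP_of; [nodup|nodup|inL|inL] | simpl; rewrite Ey0, <- E3; ring | clear -Hy0 HT0 HN3'; nia]. }
  assert (C12 : Pc (y0 + T0 * (N2 - k1)) = c).
  { apply (AH (sigma (l0 :: b2 :: a1 :: nil) - sigma (a2 :: b1 :: nil))); [apply SIP_of; [nodup|nodup|inL|inL] | simpl; rewrite Ey0, Z.mul_sub_distr_l, <- E1, <- E2; ring | clear -Hy0 HT0 HN2; nia]. }
  assert (C13 : Pc (y0 + T0 * (N3 - k1)) = c).
  { apply (AH (sigma (l0 :: b3 :: a1 :: nil) - sigma (a3 :: b1 :: nil))); [apply SIP_of; [nodup|nodup|inL|inL] | simpl; rewrite Ey0, Z.mul_sub_distr_l, <- E1, <- E3; ring | clear -Hy0 HT0 HN2 HN3; nia]. }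
  assert (C23 : Pc (y0 + T0 * (N3 - N2)) = c).
  { apply (AH (sigma (l0 :: b3 :: a2 :: nil) - sigma (a3 :: b2 :: nil))); [apply SIP_of; [nodup|nodup|inL|inL] | simpl; rewrite Ey0, Z.mul_sub_distr_l, <- E2, <- E3; ring | clear -Hy0 HT0 HN3; nia]. }
  subst T0.
  rewrite colsep in C1, C2, C3, C12, C13, C23 by lia.
  assert (S12 := sub k1 ltac:(lia) k1 k2 ltac:(lia) Hk2).
  rewrite <- EN2 in S12.
  assert (S23 := sub N2 ltac:(lia) N2 k3 ltac:(lia) Hk3).
  rewrite <- EN3 in S23.
  assert (Hk1N2 : 0 <= N2 - k1) by lia.
  assert (Hb13 : 1 <= 2^(N2-k1)*k3).
  { assert (0 < 2^(N2-k1)) by (apply Z.pow_pos_nonneg; lia). nia. }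
  assert (S13 := sub k1 ltac:(lia) k1 _ ltac:(lia) Hb13).
  replace (2^(k1+1) * (2^(N2-k1)*k3)) with N3 in S13.
  2:{ rewrite EN3, Z.mul_assoc, <- Z.pow_add_r by lia. f_equal. f_equal. ring. }
  rewrite Pscale, Gscale in S13 by lia.
  assert (PN2 : Pc N2 = Pc k2) by (rewrite EN2; apply Pscale; lia).
  assert (GN2 : Gc N2 = Gc k2) by (rewrite EN2; apply Gscale; lia).
  assert (PN3 : Pc N3 = Pc k3) by (rewrite EN3; apply Pscale; lia).
  rewrite PN2, GN2 in *. rewrite PN3 in *.
  rewrite S12 in C12. rewrite S13 in C13. rewrite S23 in C23.
  rewrite <- C0 in *.
  destruct (Pc y0), (Pc k1), (Pc k2), (Pc k3), (Gc k1), (Gc k2), (Gc k3); simpl in *; congruence.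
Qed.

Fixpoint sabs (l : list Z) : Z := match l with nil => 0 | y :: t => Z.abs y + sabs t end.
Lemma sabs_ge l : 0 <= sabs l.
Proof. induction l; simpl; lia. Qed.
Lemma sabs_in l y : In y l -> y <= sabs l.
Proof. induction l; simpl; [tauto|]. intros [<-|Hy]; [assert (Hs := sabs_ge l); lia|]. apply IHl in Hy. lia. Qed.

Lemma pos_infinite : infinite_set (fun x => 0 < x).
Proof.
  intros [l Hl]. assert (H := Hl (1 + sabs l) ltac:(assert (Hs := sabs_ge l); lia)).
  apply sabs_in in H. lia.
Qed.

Lemma part1 : forall A : Z -> Prop, subN A -> is_SIP_set A ->
     exists A1 A2 : Z -> Prop,
       (forall x, A x <-> (A1 x \/ A2 x)) /\
       (forall x, ~ (A1 x /\ A2 x)) /\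
       ~ contains_translate_SIP A1 /\ ~ contains_translate_SIP A2.
Proof.
  intros A _ _.
  exists (fun x => A x /\ Pc x = true), (fun x => A x /\ Pc x = false).
  split; [|split; [|split]].
  - intro x; split.
    + intro Hx; destruct (Pc x) eqn:E; [left|right]; auto.
    + intros [[? _]|[? _]]; auto.
  - intros x [[_ E1] [_ E2]]; congruence.
  - intros [L [u [HS [HI Hc]]]]. apply (key L u true HS HI).
    intros x Hx Hp; exact (proj2 (Hc x Hx Hp)).
  - intros [L [u [HS [HI Hc]]]]. apply (key L u false HS HI).
    intros x Hx Hp; exact (proj2 (Hc x Hx Hp)).
Qed.

Theorem theorem4p7 :
  (forall A : Z -> Prop, subN A -> is_SIP_set A ->
     exists A1 A2 : Z -> Prop,
       (forall x, A x <-> (A1 x \/ A2 x)) /\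
       (forall x, ~ (A1 x /\ A2 x)) /\
       ~ contains_translate_SIP A1 /\ ~ contains_translate_SIP A2)
  /\ ~ filterdual contains_translate_SIP.
Proof.
  split; [exact part1|].
  intro Hfd.
  assert (HSN : subN (fun x => 0 < x)) by (intros x Hx; exact Hx).
  destruct (part1 (fun x => 0 < x) HSN) as [A1 [A2 [Hiff [_ [N1 N2]]]]].
  { exists (fun x => 0 < x). split; [exact HSN|split; [exact pos_infinite|]].
    intros x _ Hx; exact Hx. }
  assert (S1 : subN A1) by (intros x Hx; apply Hiff; auto).
  assert (S2 : subN A2) by (intros x Hx; apply Hiff; auto).
  destruct (Hfd A1 A2 S1 S2) as [H|H]; [|apply N1; exact H|apply N2; exact H].
  exists (fun x => 0 < x), 0. split; [exact HSN|split; [exact pos_infinite|]].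
  intros x _ Hx. apply Hiff. exact Hx.
Qed.
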